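(* There is an absolute constant $C\ge0$ such that the following holds. Under the assumptions of the context, if the non-monotone Frank-Wolfe procedure is run with step size $\gamma=1/K$ for a positive integer $K$ (so that it performs exactly $K$ iterations), then its output satisfies $$f(x^{(K)})\ge e^{-1}f(x^* )-\frac{LD^2}{2K}-\frac{C}{K^2}f(x^* ).$$
   Context: $\bar u\in\mathbb{R}^n_{>0}$; $f:[0,\bar u]\to\mathbb{R}$ is differentiable, nonnegative, DR-submodular (for all $a\le b$ in the domain, $i\in[n]$, $k\ge0$ with $a+ke_i,b+ke_i$ in the domain, $f(a+ke_i)-f(a)\ge f(b+ke_i)-f(b)$) with $L$-Lipschitz gradient; $\mathcal{P}\subseteq[0,\bar u]$ is nonempty, compact, convex, down-closed ($x\in\mathcal{P}$, $0\le y\le x$ imply $y\in\mathcal{P}$) with diameter $D=\max_{x,y\in\mathcal{P}}\|x-y\|$; $x^*\in\arg\max_{x\in\mathcal{P}}f(x)$. Non-monotone Frank-Wolfe with step size $\gamma$: $x^{(0)}=0$, $t^{(0)}=0$; while $t^{(k)}<1$: choose $v^{(k)}\in\arg\max\{\langle v,\nabla f(x^{(k)})\rangle: v\in\mathcal{P},\ v\le\bar u-x^{(k)}\}$, $\gamma_k=\min\{\gamma,1-t^{(k)}\}$, $x^{(k+1)}=x^{(k)}+\gamma_k v^{(k)}$, $t^{(k+1)}=t^{(k)}+\gamma_k$. *)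

(* Defs.v *)
From Stdlib Require Import Reals Lra.
Open Scope R_scope.

(* Vectors of R^n are represented as functions nat -> R whose coordinates
   of index >= n vanish (see is_vec). *)
Definition vec := nat -> R.

Fixpoint sumR (n : nat) (g : nat -> R) : R :=
  match n with O => 0 | S m => sumR m g + g m end.

Definition is_vec (n : nat) (x : vec) : Prop := forall i, (n <= i)%nat -> x i = 0.

Definition vadd (x y : vec) : vec := fun i => x i + y i.
Definition vsub (x y : vec) : vec := fun i => x i - y i.
Definition vscale (a : R) (x : vec) : vec := fun i => a * x i.
Definition vzero : vec := fun _ => 0.
Definition ebasis (i : nat) : vec := fun j => if Nat.eqb j i then 1 else 0.

Definition inner (n : nat) (x y : vec) : R := sumR n (fun i => x i * y i).
Definition norm (n : nat) (x : vec) : R := sqrt (inner n x x).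
Definition dist (n : nat) (x y : vec) : R := norm n (vsub x y).

Definition vle (n : nat) (x y : vec) : Prop := forall i, (i < n)%nat -> x i <= y i.

Definition in_box (n : nat) (ubar x : vec) : Prop :=
  is_vec n x /\ vle n vzero x /\ vle n x ubar.

Definition has_gradient_on_box (n : nat) (ubar : vec) (f : vec -> R) (grad : vec -> vec) : Prop :=
  forall x, in_box n ubar x ->
    is_vec n (grad x) /\
    forall eps, 0 < eps -> exists delta, 0 < delta /\
      forall y, in_box n ubar y -> dist n y x < delta ->
        Rabs (f y - f x - inner n (grad x) (vsub y x)) <= eps * dist n y x.

Definition lipschitz_gradient (n : nat) (ubar : vec) (grad : vec -> vec) (L : R) : Prop :=
  0 <= L /\
  forall x y, in_box n ubar x -> in_box n ubar y ->
    dist n (grad x) (grad y) <= L * dist n x y.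

Definition nonneg_on_box (n : nat) (ubar : vec) (f : vec -> R) : Prop :=
  forall x, in_box n ubar x -> 0 <= f x.

Definition DR_submodular (n : nat) (ubar : vec) (f : vec -> R) : Prop :=
  forall a b i k,
    in_box n ubar a -> in_box n ubar b -> vle n a b -> (i < n)%nat -> 0 <= k ->
    in_box n ubar (vadd a (vscale k (ebasis i))) ->
    in_box n ubar (vadd b (vscale k (ebasis i))) ->
    f (vadd a (vscale k (ebasis i))) - f a >= f (vadd b (vscale k (ebasis i))) - f b.

Definition closed_set (n : nat) (P : vec -> Prop) : Prop :=
  forall (xs : nat -> vec) (x : vec), is_vec n x ->
    (forall k, P (xs k)) ->
    (forall eps, 0 < eps -> exists N, forall k, (N <= k)%nat -> dist n (xs k) x < eps) ->
    P x.

Definition bounded_set (n : nat) (P : vec -> Prop) : Prop :=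
  exists M, forall x, P x -> norm n x <= M.

Definition compact_set (n : nat) (P : vec -> Prop) : Prop :=
  closed_set n P /\ bounded_set n P.

Definition convex_set (P : vec -> Prop) : Prop :=
  forall x y lam, P x -> P y -> 0 <= lam <= 1 ->
    P (vadd (vscale lam x) (vscale (1 - lam) y)).

Definition down_closed (n : nat) (P : vec -> Prop) : Prop :=
  forall x y, P x -> is_vec n y -> vle n vzero y -> vle n y x -> P y.

Definition admissible_set (n : nat) (ubar : vec) (P : vec -> Prop) : Prop :=
  (forall x, P x -> in_box n ubar x) /\
  (exists x, P x) /\ compact_set n P /\ convex_set P /\ down_closed n P.

Definition is_diameter (n : nat) (P : vec -> Prop) (D : R) : Prop :=
  (exists x y, P x /\ P y /\ dist n x y = D) /\
  (forall x y, P x -> P y -> dist n x y <= D).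

Definition is_maximizer (P : vec -> Prop) (f : vec -> R) (xs : vec) : Prop :=
  P xs /\ forall x, P x -> f x <= f xs.

(* A run of the non-monotone Frank-Wolfe procedure with step size gamma:
   sequences x^(k), v^(k), t^(k); whenever t^(k) < 1 (the loop continues),
   v^(k) is a maximizer of <v, grad f(x^(k))> over {v in P, v <= ubar - x^(k)}
   and the update is performed with gamma_k = min(gamma, 1 - t^(k)). *)
Definition FW_run (n : nat) (ubar : vec) (P : vec -> Prop) (grad : vec -> vec)
  (gamma : R) (x v : nat -> vec) (t : nat -> R) : Prop :=
  x O = vzero /\ t O = 0 /\
  forall k, t k < 1 ->
    (P (v k) /\ vle n (v k) (vsub ubar (x k)) /\
     (forall w, P w -> vle n w (vsub ubar (x k)) ->
        inner n w (grad (x k)) <= inner n (v k) (grad (x k)))) /\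
    x (S k) = vadd (x k) (vscale (Rmin gamma (1 - t k)) (v k)) /\
    t (S k) = t k + Rmin gamma (1 - t k).

(* Main.v *)
Require Import Defs.
From Stdlib Require Import Reals.
Open Scope R_scope.
From Stdlib Require Import Lra Lia FunctionalExtensionality.
From Coquelicot Require Import Coquelicot.
Require Import Defs.
Open Scope R_scope.


Lemma sumR_ext n g h : (forall i, (i < n)%nat -> g i = h i) -> sumR n g = sumR n h.
Proof. induction n; simpl; intros H; auto. rewrite IHn by (intros; apply H; lia). rewrite H by lia. auto. Qed.

Lemma sumR_plus n g h : sumR n (fun i => g i + h i) = sumR n g + sumR n h.
Proof. induction n; simpl; [lra|]. rewrite IHn. lra. Qed.

Lemma sumR_scal n c g : sumR n (fun i => c * g i) = c * sumR n g.
Proof. induction n; simpl; [lra|]. rewrite IHn. lra. Qed.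

Lemma sumR_le n g h : (forall i, (i < n)%nat -> g i <= h i) -> sumR n g <= sumR n h.
Proof. induction n; simpl; intros H; [lra|]. assert (g n <= h n) by (apply H; lia).
  assert (sumR n g <= sumR n h) by (apply IHn; intros; apply H; lia). lra. Qed.

Lemma sumR_delta n i c : (i < n)%nat -> sumR n (fun j => if Nat.eqb j i then c else 0) = c.
Proof.
  induction n; simpl; intros H; [lia|].
  destruct (Nat.eqb n i) eqn:E.
  - apply Nat.eqb_eq in E; subst. rewrite (sumR_ext _ _ (fun _ => 0)).
    + clear. assert (forall m, sumR m (fun _ => 0) = 0) by (induction m; simpl; lra). rewrite H. lra.
    + intros j Hj. destruct (Nat.eqb j i) eqn:E; auto. apply Nat.eqb_eq in E; lia.
  - apply Nat.eqb_neq in E. rewrite IHn by lia. lra.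
Qed.

Lemma inner_comm n x y : inner n x y = inner n y x.
Proof. unfold inner. apply sumR_ext. intros; ring. Qed.

Lemma inner_ge0 n x : 0 <= inner n x x.
Proof. unfold inner. induction n; simpl; [lra|]. pose proof (Rle_0_sqr (x n)). unfold Rsqr in H. lra. Qed.

Lemma norm_ge0 n x : 0 <= norm n x.
Proof. apply sqrt_pos. Qed.

Lemma norm_sq n x : norm n x * norm n x = inner n x x.
Proof. unfold norm. apply sqrt_sqrt, inner_ge0. Qed.

Lemma CS n a b : inner n a b <= norm n a * norm n b.
Proof.
  set (A := inner n a a). set (B := inner n b b). set (C := inner n a b).
  assert (Q : forall t, 0 <= A + 2 * t * C + t * t * B).
  { intro t. pose proof (inner_ge0 n (fun i => a i + t * b i)).
    unfold inner in H |- *. unfold A, B, C, inner.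
    replace (sumR n (fun i => (a i + t * b i) * (a i + t * b i))) with
      (sumR n (fun i => a i * a i) + 2 * t * sumR n (fun i => a i * b i) + t * t * sumR n (fun i => b i * b i)) in H; auto.
    rewrite <- !sumR_scal, <- !sumR_plus. apply sumR_ext; intros; ring. }
  assert (HA : 0 <= A) by apply inner_ge0. assert (HB : 0 <= B) by apply inner_ge0.
  assert (C2 : C * C <= A * B).
  { destruct (Req_dec B 0) as [E|E].
    - assert (C = 0).
      { destruct (Req_dec C 0); auto. exfalso. specialize (Q (- (A + 1) / (2 * C))).
        rewrite E in Q.
        replace (A + 2 * (- (A + 1) / (2 * C)) * C + - (A + 1) / (2 * C) * (- (A + 1) / (2 * C)) * 0) with (-1) in Q by (field; auto). lra. }
      rewrite H. nra.
    - specialize (Q (- C / B)).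
      replace (A + 2 * (- C / B) * C + - C / B * (- C / B) * B) with (A - (C * C / B)) in Q by (field; auto).
      assert (0 < B) by lra.
      replace (C * C) with ((C * C / B) * B) by (field; auto). nra. }
  destruct (Rle_dec C 0). { pose proof (norm_ge0 n a); pose proof (norm_ge0 n b). nra. }
  assert (norm n a * norm n b = sqrt (A * B)). { unfold norm. rewrite sqrt_mult; auto. }
  rewrite H. rewrite <- (sqrt_square C) by lra. apply sqrt_le_1_alt. lra.
Qed.

Lemma vec_ext (x y : vec) : (forall i, x i = y i) -> x = y.
Proof. intros; apply functional_extensionality; auto. Qed.

Lemma inner_ext n g d d' : (forall i, (i < n)%nat -> d i = d' i) -> inner n g d = inner n g d'.
Proof. intros H; unfold inner; apply sumR_ext; intros; rewrite H; auto. Qed.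

Lemma inner_scal_r n g s d : inner n g (fun i => s * d i) = s * inner n g d.
Proof. unfold inner; rewrite <- sumR_scal; apply sumR_ext; intros; ring. Qed.

Lemma inner_neg_l n g d : inner n (fun i => - g i) d = - inner n g d.
Proof. unfold inner. replace (- sumR n (fun i => g i * d i)) with ((-1) * sumR n (fun i => g i * d i)) by ring.
  rewrite <- sumR_scal; apply sumR_ext; intros; ring. Qed.

Lemma norm_ext n d d' : (forall i, (i < n)%nat -> d i = d' i) -> norm n d = norm n d'.
Proof. intros H; unfold norm, inner; f_equal; apply sumR_ext; intros; rewrite H; auto. Qed.

Lemma norm_scal n s d : norm n (fun i => s * d i) = Rabs s * norm n d.
Proof. unfold norm. replace (inner n (fun i => s * d i) (fun i => s * d i)) with ((s * s) * inner n d d).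
  - rewrite sqrt_mult; [| nra | apply inner_ge0].
    rewrite <- Rsqr_def. rewrite sqrt_Rsqr_abs. auto.
  - unfold inner. rewrite <- sumR_scal; apply sumR_ext; intros; ring. Qed.

Lemma abs_inner_le n g d : Rabs (inner n g d) <= norm n g * norm n d.
Proof. apply Rabs_le. split.
  - pose proof (CS n (fun i => - g i) d). rewrite inner_neg_l in H.
    replace (norm n (fun i => - g i)) with (norm n g) in H. lra.
    replace (fun i => - g i) with (fun i => (-1) * g i) by (apply vec_ext; intros; ring).
    rewrite norm_scal. replace (Rabs (-1)) with 1 by (split_Rabs; lra). ring.
  - apply CS. Qed.

Lemma f_cont n ubar f grad : has_gradient_on_box n ubar f grad ->
  forall z, in_box n ubar z -> forall eps, 0 < eps -> exists delta, 0 < delta /\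
    forall w, in_box n ubar w -> dist n w z < delta -> Rabs (f w - f z) <= eps.
Proof.
  intros Hg z Hz eps He. destruct (Hg z Hz) as [_ Hd]. destruct (Hd 1 Rlt_0_1) as [d1 [Hd1 H1]].
  set (G := norm n (grad z)). assert (0 <= G) by apply norm_ge0.
  exists (Rmin d1 (eps / (G + 1))). split.
  { apply Rmin_glb_lt; auto. apply Rdiv_lt_0_compat; lra. }
  intros w Hw Hdist. specialize (H1 w Hw (Rlt_le_trans _ _ _ Hdist (Rmin_l _ _))).
  pose proof (abs_inner_le n (grad z) (vsub w z)).
  assert (dist n w z < eps / (G + 1)) by (eapply Rlt_le_trans; [apply Hdist| apply Rmin_r]).
  unfold dist in *. fold G in H0.
  assert (0 <= norm n (vsub w z)) by apply norm_ge0.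
  assert (norm n (vsub w z) * (G + 1) <= eps).
  { apply Rmult_lt_compat_r with (r := G + 1) in H2; [|lra]. unfold Rdiv in H2. rewrite Rmult_assoc, Rinv_l in H2; lra. }
  assert (Rabs (f w - f z) <= Rabs (f w - f z - inner n (grad z) (vsub w z)) + Rabs (inner n (grad z) (vsub w z))).
  { replace (f w - f z) with ((f w - f z - inner n (grad z) (vsub w z)) + inner n (grad z) (vsub w z)) at 1 by ring. apply Rabs_triang. }
  nra.
Qed.

Definition seg (x y : vec) (s : R) : vec := fun i => x i + s * (y i - x i).
Definition clamp (s : R) : R := Rmax 0 (Rmin s 1).

Lemma clamp_in s : 0 <= clamp s <= 1.
Proof. unfold clamp, Rmax, Rmin; repeat destruct Rle_dec; lra. Qed.
Lemma clamp_id s : 0 <= s <= 1 -> clamp s = s.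
Proof. unfold clamp, Rmax, Rmin; repeat destruct Rle_dec; lra. Qed.
Lemma clamp_lip a b : Rabs (clamp a - clamp b) <= Rabs (a - b).
Proof. unfold clamp, Rmax, Rmin; repeat destruct Rle_dec; split_Rabs; lra. Qed.

Lemma seg_box n ubar x y s : in_box n ubar x -> in_box n ubar y -> 0 <= s <= 1 -> in_box n ubar (seg x y s).
Proof.
  intros [Vx [Lx Ux]] [Vy [Ly Uy]] Hs. unfold seg, vle, is_vec, vzero in *. split; [|split].
  - intros i Hi. rewrite Vx, Vy by auto. ring.
  - intros i Hi. specialize (Lx i Hi); specialize (Ly i Hi). unfold vzero in *.
    assert (0 <= (1 - s) * x i) by (apply Rmult_le_pos; lra). assert (0 <= s * y i) by (apply Rmult_le_pos; lra). unfold vzero. nra.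
  - intros i Hi. specialize (Ux i Hi); specialize (Uy i Hi).
    assert ((1 - s) * x i <= (1 - s) * ubar i) by (apply Rmult_le_compat_l; lra).
    assert (s * y i <= s * ubar i) by (apply Rmult_le_compat_l; lra). nra.
Qed.

Lemma seg_dist n x y a b : dist n (seg x y a) (seg x y b) = Rabs (a - b) * norm n (vsub y x).
Proof. unfold dist. rewrite <- norm_scal. apply norm_ext. intros; unfold vsub, seg; ring. Qed.

Lemma phi_cont n ubar f grad x y : has_gradient_on_box n ubar f grad ->
  in_box n ubar x -> in_box n ubar y ->
  forall c, continuity_pt (fun s => f (seg x y (clamp s))) c.
Proof.
  intros Hg Hx Hy c. unfold continuity_pt, continue_in, limit1_in, limit_in. intros eps He.
  pose proof (clamp_in c) as Hc.
  destruct (f_cont n ubar f grad Hg (seg x y (clamp c)) (seg_box n ubar x y _ Hx Hy Hc) (eps/2)) as [dl [Hdl H]]; [lra|].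
  set (N := norm n (vsub y x)). assert (0 <= N) by apply norm_ge0.
  exists (dl / (N + 1)). split. { apply Rdiv_lt_0_compat; lra. }
  intros s [_ Hs]. simpl in Hs |- *. unfold R_dist in *.
  assert (Rabs (f (seg x y (clamp s)) - f (seg x y (clamp c))) <= eps / 2).
  { apply H. apply seg_box; auto; apply clamp_in.
    rewrite seg_dist. fold N. pose proof (clamp_lip s c).
    assert (Rabs (s - c) * (N + 1) < dl).
    { apply Rmult_lt_compat_r with (r := N + 1) in Hs; [|lra]. unfold Rdiv in Hs. rewrite Rmult_assoc, Rinv_l in Hs; lra. }
    pose proof (Rabs_pos (clamp s - clamp c)). nra. }
  lra.
Qed.

Lemma phi_deriv n ubar f grad x y : has_gradient_on_box n ubar f grad ->
  in_box n ubar x -> in_box n ubar y ->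
  forall c, 0 < c < 1 -> derivable_pt_lim (fun s => f (seg x y (clamp s))) c
     (inner n (grad (seg x y c)) (vsub y x)).
Proof.
  intros Hg Hx Hy c Hc eps He.
  assert (Hzc : in_box n ubar (seg x y c)) by (apply seg_box; auto; lra).
  set (N := norm n (vsub y x)). assert (0 <= N) by apply norm_ge0.
  destruct (Hg _ Hzc) as [_ Hd]. destruct (Hd (eps / (2 * (N + 1)))) as [d1 [Hd1 H1]].
  { apply Rdiv_lt_0_compat; lra. }
  assert (Hpos : 0 < Rmin (Rmin c (1 - c)) (d1 / (N + 1))).
  { repeat apply Rmin_glb_lt; try lra. apply Rdiv_lt_0_compat; lra. }
  exists (mkposreal _ Hpos). intros h Hh0 Hh. simpl in Hh.
  assert (Hh1 : Rabs h < Rmin c (1 - c)) by (eapply Rlt_le_trans; [apply Hh| apply Rmin_l]).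
  assert (Hh2 : Rabs h < d1 / (N + 1)) by (eapply Rlt_le_trans; [apply Hh| apply Rmin_r]).
  assert (Hch : 0 <= c + h <= 1).
  { pose proof (Rmin_l c (1 - c)); pose proof (Rmin_r c (1-c)). split_Rabs; lra. }
  rewrite !clamp_id by (auto; lra).
  assert (Hw : in_box n ubar (seg x y (c + h))) by (apply seg_box; auto).
  assert (Hdist : dist n (seg x y (c + h)) (seg x y c) = Rabs h * N).
  { rewrite seg_dist. f_equal. f_equal. ring. }
  assert (HdN : Rabs h * N < d1).
  { assert (Rabs h * (N + 1) < d1).
    { apply Rmult_lt_compat_r with (r := N + 1) in Hh2; [|lra]. unfold Rdiv in Hh2. rewrite Rmult_assoc, Rinv_l in Hh2; lra. }
    pose proof (Rabs_pos h). nra. }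
  rewrite <- Hdist in HdN. specialize (H1 _ Hw HdN). rewrite Hdist in H1.
  assert (Hin : inner n (grad (seg x y c)) (vsub (seg x y (c + h)) (seg x y c)) = h * inner n (grad (seg x y c)) (vsub y x)).
  { rewrite <- inner_scal_r. apply inner_ext. intros; unfold vsub, seg; ring. }
  rewrite Hin in H1. set (l := inner n (grad (seg x y c)) (vsub y x)) in *.
  assert (Hah : 0 < Rabs h) by (apply Rabs_pos_lt; auto).
  replace ((f (seg x y (c + h)) - f (seg x y c)) / h - l) with ((f (seg x y (c + h)) - f (seg x y c) - h * l) / h) by (field; auto).
  unfold Rdiv at 1; rewrite Rabs_mult, Rabs_inv.
  apply Rmult_lt_reg_r with (r := Rabs h); auto. unfold Rdiv. rewrite Rmult_assoc, Rinv_l by lra. rewrite Rmult_1_r.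
  eapply Rle_lt_trans; [apply H1|].
  assert (eps / (2 * (N + 1)) * (Rabs h * N) = eps * Rabs h * (N / (2 * (N + 1)))) by (field; lra).
  rewrite H0. assert (N / (2 * (N + 1)) < 1).
  { apply Rmult_lt_reg_r with (r := 2 * (N + 1)); [lra|]. unfold Rdiv; rewrite Rmult_assoc, Rinv_l; lra. }
  assert (0 < eps * Rabs h) by nra. nra.
Qed.

Lemma seg0 x y : seg x y 0 = x.
Proof. apply vec_ext; intros; unfold seg; ring. Qed.
Lemma seg1 x y : seg x y 1 = y.
Proof. apply vec_ext; intros; unfold seg; ring. Qed.

Lemma poly_deriv c1 c2 s : derivable_pt_lim (fun s => - s * c1 + s * s * c2) s (- c1 + 2 * s * c2).
Proof. apply is_derive_Reals. auto_derive; auto. ring. Qed.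

Lemma poly_cont c1 c2 s : continuity_pt (fun s => - s * c1 + s * s * c2) s.
Proof. apply derivable_continuous_pt. exists (- c1 + 2 * s * c2). apply poly_deriv. Qed.

Lemma mvt_gen_seg n ubar f grad x y (q : R -> R) (dq : R -> R) :
  has_gradient_on_box n ubar f grad -> in_box n ubar x -> in_box n ubar y ->
  (forall s, derivable_pt_lim q s (dq s)) ->
  exists c, 0 <= c <= 1 /\
    (f y + q 1) - (f x + q 0) = inner n (grad (seg x y c)) (vsub y x) + dq c.
Proof.
  intros Hg Hx Hy Hq.
  destruct (MVT_gen (fun s => f (seg x y (clamp s)) + q s) 0 1
     (fun s => inner n (grad (seg x y s)) (vsub y x) + dq s)) as [c [Hc E]].
  - intros s Hs. rewrite Rmin_left in Hs by lra. rewrite Rmax_right in Hs by lra.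
    apply is_derive_Reals. apply (derivable_pt_lim_plus (fun s => f (seg x y (clamp s))) q).
    + apply (phi_deriv n ubar f grad x y Hg Hx Hy s Hs).
    + apply Hq.
  - intros s _. apply (continuity_pt_plus (fun s => f (seg x y (clamp s))) q).
    + apply (phi_cont n ubar f grad x y Hg Hx Hy).
    + apply derivable_continuous_pt. exists (dq s). apply Hq.
  - rewrite Rmin_left in Hc by lra. rewrite Rmax_right in Hc by lra.
    exists c. split; auto. rewrite !clamp_id in E by lra. rewrite seg0, seg1 in E. lra.
Qed.

Lemma mvt_seg n ubar f grad x y :
  has_gradient_on_box n ubar f grad -> in_box n ubar x -> in_box n ubar y ->
  exists c, 0 <= c <= 1 /\ f y - f x = inner n (grad (seg x y c)) (vsub y x).
Proof.
  intros Hg Hx Hy. destruct (mvt_gen_seg n ubar f grad x y (fun _ => 0) (fun _ => 0) Hg Hx Hy) as [c [Hc E]].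
  - intros s. apply derivable_pt_lim_const.
  - exists c; split; auto. lra.
Qed.

Lemma inner_sub_l n a b d : inner n (vsub a b) d = inner n a d - inner n b d.
Proof. unfold inner, vsub. replace (sumR n (fun i => a i * d i) - sumR n (fun i => b i * d i))
  with (sumR n (fun i => a i * d i) + (-1) * sumR n (fun i => b i * d i)) by ring.
  rewrite <- sumR_scal, <- sumR_plus. apply sumR_ext; intros; ring. Qed.

Lemma descent n ubar f grad L x y :
  has_gradient_on_box n ubar f grad -> lipschitz_gradient n ubar grad L ->
  in_box n ubar x -> in_box n ubar y ->
  f y >= f x + inner n (grad x) (vsub y x) - L / 2 * inner n (vsub y x) (vsub y x).
Proof.
  intros Hg [HL Hlip] Hx Hy.
  set (c1 := inner n (grad x) (vsub y x)). set (Q := inner n (vsub y x) (vsub y x)).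
  destruct (mvt_gen_seg n ubar f grad x y (fun s => - s * c1 + s * s * (L / 2 * Q))
     (fun s => - c1 + 2 * s * (L / 2 * Q)) Hg Hx Hy) as [c [Hc E]].
  - intros s; apply poly_deriv.
  - assert (Hz : in_box n ubar (seg x y c)) by (apply seg_box; auto).
    specialize (Hlip _ _ Hz Hx).
    replace (dist n (seg x y c) x) with (Rabs (c - 0) * norm n (vsub y x)) in Hlip
      by (rewrite <- seg_dist, seg0; auto).
    set (N := norm n (vsub y x)) in *.
    assert (HN : N * N = Q) by apply norm_sq.
    pose proof (CS n (fun i => - (vsub (grad (seg x y c)) (grad x) i)) (vsub y x)).
    rewrite inner_neg_l, inner_sub_l in H.
    replace (norm n (fun i => - vsub (grad (seg x y c)) (grad x) i)) with (dist n (grad (seg x y c)) (grad x)) in H.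
    2:{ unfold dist. replace (fun i => - vsub (grad (seg x y c)) (grad x) i) with (fun i => (-1) * vsub (grad (seg x y c)) (grad x) i) by (apply vec_ext; intros; ring).
        rewrite norm_scal. replace (Rabs (-1)) with 1 by (split_Rabs; lra). ring. }
    fold N in H. fold c1 in H.
    replace (Rabs (c - 0)) with c in Hlip by (split_Rabs; lra).
    assert (0 <= N) by apply norm_ge0.
    assert (dist n (grad (seg x y c)) (grad x) * N <= L * c * N * N) by (apply (Rmult_le_compat_r N) in Hlip; auto; lra).
    assert (E2 : f y - f x = inner n (grad (seg x y c)) (vsub y x) - c1 + 2 * c * (L / 2 * Q) - (- 1 * c1 + 1 * 1 * (L / 2 * Q)) + (- 0 * c1 + 0 * 0 * (L / 2 * Q))) by lra.
    rewrite <- HN in E2 |- *. nra.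
Qed.

Definition mv (a : vec) (c : R) (i : nat) : vec := vadd a (vscale c (ebasis i)).

Lemma mv_at a c i j : mv a c i j = if Nat.eqb j i then a j + c else a j.
Proof. unfold mv, vadd, vscale, ebasis. destruct (Nat.eqb j i); ring. Qed.

Lemma boxe n ubar a c i : in_box n ubar a -> (i < n)%nat -> 0 <= a i + c <= ubar i ->
  in_box n ubar (mv a c i).
Proof.
  intros [V [Lo Up]] Hi Hc. unfold in_box, is_vec, vle, vzero in *. split; [|split]; intros j Hj; rewrite mv_at;
  destruct (Nat.eqb j i) eqn:E; try (apply Nat.eqb_eq in E; subst); try lra; auto.
  all: try lia.
Qed.

Lemma mv_mv a c i : mv (mv a (- c) i) c i = a.
Proof. apply vec_ext; intros j. rewrite !mv_at. destruct (Nat.eqb j i); ring. Qed.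

Lemma mv_le n a b c i : vle n a b -> vle n (mv a c i) (mv b c i).
Proof. intros H j Hj. rewrite !mv_at. specialize (H j Hj). destruct (Nat.eqb j i); lra. Qed.

Lemma inner_e n g i : (i < n)%nat -> inner n g (ebasis i) = g i.
Proof. intros Hi. unfold inner, ebasis. rewrite <- (sumR_delta n i (g i)) by auto.
  apply sumR_ext; intros j _. destruct (Nat.eqb j i) eqn:E; [apply Nat.eqb_eq in E; subst|]; ring. Qed.

Lemma norm_e n i : (i < n)%nat -> norm n (ebasis i) = 1.
Proof. intros Hi. unfold norm. rewrite inner_e by auto. unfold ebasis. rewrite Nat.eqb_refl. apply sqrt_1. Qed.

Lemma partial n ubar f grad a i : has_gradient_on_box n ubar f grad -> in_box n ubar a -> (i < n)%nat ->
  forall eps, 0 < eps -> exists delta, 0 < delta /\ forall k, in_box n ubar (mv a k i) -> Rabs k < delta ->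
    Rabs (f (mv a k i) - f a - k * grad a i) <= eps * Rabs k.
Proof.
  intros Hg Ha Hi eps He. destruct (Hg a Ha) as [_ Hd]. destruct (Hd eps He) as [d [Hd0 H]].
  exists d. split; auto. intros k Hk Hkd.
  assert (Dk : dist n (mv a k i) a = Rabs k).
  { unfold dist. rewrite (norm_ext n _ (fun j => k * ebasis i j)). rewrite norm_scal, norm_e by auto. ring.
    intros j _. unfold vsub, mv, vadd, vscale. ring. }
  rewrite <- Dk in Hkd |- *. specialize (H _ Hk Hkd).
  replace (k * grad a i) with (inner n (grad a) (vsub (mv a k i) a)); auto.
  rewrite (inner_ext n _ _ (fun j => k * ebasis i j)). rewrite inner_scal_r, inner_e by auto. auto.
  intros j _. unfold vsub, mv, vadd, vscale. ring.
Qed.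

Lemma abs_le_b x y : Rabs x <= y -> - y <= x <= y.
Proof. split_Rabs; lra. Qed.

Lemma grad_anti n ubar f grad a b i :
  has_gradient_on_box n ubar f grad -> DR_submodular n ubar f ->
  (forall j, (j < n)%nat -> 0 < ubar j) ->
  in_box n ubar a -> in_box n ubar b -> vle n a b -> (i < n)%nat -> grad b i <= grad a i.
Proof.
  intros Hg HDR Hu Ha Hb Hab Hi. apply Rnot_lt_le. intros Hlt.
  set (eps := (grad b i - grad a i) / 4). assert (He : 0 < eps) by (unfold eps; lra).
  destruct (partial n ubar f grad a i Hg Ha Hi eps He) as [da [Hda Pa]].
  destruct (partial n ubar f grad b i Hg Hb Hi eps He) as [db [Hdb Pb]].
  pose proof (Hu i Hi) as Hui.
  destruct Ha as [Va [La Ua]]. destruct Hb as [Vb [Lb Ub]].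
  pose proof (La i Hi) as Lai. pose proof (Ua i Hi) as Uai. pose proof (Lb i Hi) as Lbi. pose proof (Ub i Hi) as Ubi.
  pose proof (Hab i Hi) as Habi. unfold vzero in Lai, Lbi.
  assert (Ha : in_box n ubar a) by (split; auto). assert (Hb : in_box n ubar b) by (split; auto).
  set (room := if Rlt_dec (b i) (ubar i) then ubar i - b i else if Rlt_dec (a i) (ubar i) then ubar i - a i else ubar i).
  assert (Hroom : 0 < room) by (unfold room; repeat destruct Rlt_dec; lra).
  set (k := Rmin (Rmin da db) room / 2).
  assert (Hk0 : 0 < k) by (unfold k; assert (0 < Rmin (Rmin da db) room) by (repeat apply Rmin_glb_lt; lra); lra).
  assert (Hkr : k < room) by (unfold k; pose proof (Rmin_r (Rmin da db) room); lra).
  assert (Hkm : Rabs (- k) = k) by (split_Rabs; lra). assert (Hkp : Rabs k = k) by (split_Rabs; lra).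
  assert (Hka : Rabs k < da) by (rewrite Hkp; unfold k; pose proof (Rmin_l (Rmin da db) room); pose proof (Rmin_l da db); lra).
  assert (Hkb : Rabs k < db) by (rewrite Hkp; unfold k; pose proof (Rmin_l (Rmin da db) room); pose proof (Rmin_r da db); lra).
  unfold room in Hkr.
  destruct (Rlt_dec (b i) (ubar i)) as [C1|C1].
  - assert (Ba : in_box n ubar (mv a k i)) by (apply boxe; auto; lra).
    assert (Bb : in_box n ubar (mv b k i)) by (apply boxe; auto; lra).
    specialize (HDR a b i k Ha Hb Hab Hi (Rlt_le _ _ Hk0) Ba Bb).
    specialize (Pa k Ba Hka). specialize (Pb k Bb Hkb). rewrite Hkp in Pa, Pb.
    unfold mv in Pa, Pb. apply abs_le_b in Pa. apply abs_le_b in Pb.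
    assert (4 * (eps * k) = k * grad b i - k * grad a i) by (unfold eps; field).
    assert (0 < k * (grad b i - grad a i)) by (apply Rmult_lt_0_compat; lra). lra.
  - destruct (Rlt_dec (a i) (ubar i)) as [C2|C2].
    + assert (Ba : in_box n ubar (mv a k i)) by (apply boxe; auto; lra).
      assert (Bb' : in_box n ubar (mv b (- k) i)) by (apply boxe; auto; lra).
      assert (Hab' : vle n a (mv b (- k) i)).
      { intros j Hj. rewrite mv_at. destruct (Nat.eqb j i) eqn:E; [apply Nat.eqb_eq in E; subst; lra| apply Hab; auto]. }
      assert (Bb : in_box n ubar (mv (mv b (- k) i) k i)) by (rewrite mv_mv; auto).
      specialize (HDR a _ i k Ha Bb' Hab' Hi (Rlt_le _ _ Hk0) Ba Bb). change (vadd (mv b (-k) i) (vscale k (ebasis i))) with (mv (mv b (-k) i) k i) in HDR.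
      rewrite mv_mv in HDR.
      specialize (Pa k Ba Hka). specialize (Pb (- k) Bb' ltac:(rewrite Hkm; rewrite Hkp in *; auto)). rewrite Hkp in Pa. rewrite Hkm in Pb.
      unfold mv in Pa, Pb, HDR. apply abs_le_b in Pa. apply abs_le_b in Pb.
      assert (4 * (eps * k) = k * grad b i - k * grad a i) by (unfold eps; field).
    assert (0 < k * (grad b i - grad a i)) by (apply Rmult_lt_0_compat; lra). lra.
    + assert (Ba' : in_box n ubar (mv a (- k) i)) by (apply boxe; auto; lra).
      assert (Bb' : in_box n ubar (mv b (- k) i)) by (apply boxe; auto; lra).
      assert (Hab' : vle n (mv a (- k) i) (mv b (- k) i)) by (apply mv_le; auto).
      assert (Ba : in_box n ubar (mv (mv a (- k) i) k i)) by (rewrite mv_mv; auto).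
      assert (Bb : in_box n ubar (mv (mv b (- k) i) k i)) by (rewrite mv_mv; auto).
      specialize (HDR _ _ i k Ba' Bb' Hab' Hi (Rlt_le _ _ Hk0) Ba Bb).
      change (vadd (mv b (-k) i) (vscale k (ebasis i))) with (mv (mv b (-k) i) k i) in HDR.
      change (vadd (mv a (-k) i) (vscale k (ebasis i))) with (mv (mv a (-k) i) k i) in HDR. rewrite !mv_mv in HDR.
      specialize (Pa (- k) Ba' ltac:(rewrite Hkm; rewrite Hkp in *; auto)). specialize (Pb (- k) Bb' ltac:(rewrite Hkm; rewrite Hkp in *; auto)).
      rewrite Hkm in Pa, Pb.
      unfold mv in Pa, Pb, HDR. apply abs_le_b in Pa. apply abs_le_b in Pb.
      assert (4 * (eps * k) = k * grad b i - k * grad a i) by (unfold eps; field).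
    assert (0 < k * (grad b i - grad a i)) by (apply Rmult_lt_0_compat; lra). lra.
Qed.

Lemma inner_mono n g1 g2 d : (forall i, (i < n)%nat -> g1 i <= g2 i) -> (forall i, (i < n)%nat -> 0 <= d i) ->
  inner n g1 d <= inner n g2 d.
Proof. intros H1 H2. unfold inner. apply sumR_le. intros i Hi. apply Rmult_le_compat_r; auto. Qed.

Lemma seg_le n x y s : vle n x y -> 0 <= s <= 1 -> vle n x (seg x y s) /\ vle n (seg x y s) y.
Proof. intros H Hs. split; intros i Hi; specialize (H i Hi); unfold seg.
  - assert (0 <= s * (y i - x i)) by (apply Rmult_le_pos; lra). lra.
  - assert (s * (y i - x i) <= 1 * (y i - x i)) by (apply Rmult_le_compat_r; lra). lra. Qed.

Lemma bprime n ubar f grad p q :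
  has_gradient_on_box n ubar f grad -> DR_submodular n ubar f ->
  (forall j, (j < n)%nat -> 0 < ubar j) ->
  in_box n ubar p -> in_box n ubar q -> vle n p q ->
  inner n (grad q) (vsub q p) <= f q - f p <= inner n (grad p) (vsub q p).
Proof.
  intros Hg HDR Hu Hp Hq Hpq. destruct (mvt_seg n ubar f grad p q Hg Hp Hq) as [c [Hc E]].
  rewrite E. assert (Hz : in_box n ubar (seg p q c)) by (apply seg_box; auto).
  destruct (seg_le n p q c Hpq Hc) as [H1 H2].
  assert (Hd : forall i, (i < n)%nat -> 0 <= vsub q p i) by (intros i Hi; unfold vsub; specialize (Hpq i Hi); lra).
  split; apply inner_mono; auto; intros i Hi; eapply grad_anti; eauto.
Qed.

Lemma concave n ubar f grad p q lam :
  has_gradient_on_box n ubar f grad -> DR_submodular n ubar f ->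
  (forall j, (j < n)%nat -> 0 < ubar j) ->
  in_box n ubar p -> in_box n ubar q -> vle n p q -> 0 <= lam <= 1 ->
  f (seg p q lam) >= (1 - lam) * f p + lam * f q.
Proof.
  intros Hg HDR Hu Hp Hq Hpq Hl.
  assert (Hr : in_box n ubar (seg p q lam)) by (apply seg_box; auto).
  destruct (seg_le n p q lam Hpq Hl) as [H1 H2].
  destruct (bprime n ubar f grad p (seg p q lam) Hg HDR Hu Hp Hr H1) as [A _].
  destruct (bprime n ubar f grad (seg p q lam) q Hg HDR Hu Hr Hq H2) as [_ B].
  set (G := inner n (grad (seg p q lam)) (vsub q p)).
  assert (E1 : inner n (grad (seg p q lam)) (vsub (seg p q lam) p) = lam * G).
  { unfold G. rewrite <- inner_scal_r. apply inner_ext. intros; unfold vsub, seg; ring. }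
  assert (E2 : inner n (grad (seg p q lam)) (vsub q (seg p q lam)) = (1 - lam) * G).
  { unfold G. rewrite <- inner_scal_r. apply inner_ext. intros; unfold vsub, seg; ring. }
  rewrite E1 in A. rewrite E2 in B.
  assert (lam * (f q - f (seg p q lam)) <= lam * ((1 - lam) * G)) by (apply Rmult_le_compat_l; lra).
  assert ((1 - lam) * (lam * G) <= (1 - lam) * (f (seg p q lam) - f p)) by (apply Rmult_le_compat_l; lra).
  nra.
Qed.

Definition vmax (x y : vec) : vec := fun i => Rmax (x i) (y i).

Lemma lemC n ubar f grad x xs rho :
  has_gradient_on_box n ubar f grad -> DR_submodular n ubar f ->
  (forall j, (j < n)%nat -> 0 < ubar j) -> nonneg_on_box n ubar f ->
  in_box n ubar x -> in_box n ubar xs -> 0 < rho <= 1 ->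
  (forall i, (i < n)%nat -> x i <= (1 - rho) * ubar i) ->
  f (vmax x xs) >= rho * f xs.
Proof.
  intros Hg HDR Hu Hnn Hx Hxs Hr Hxi.
  destruct Hx as [Vx [Lx Ux]]. destruct Hxs as [Vs [Ls Us]].
  unfold vle, vzero, is_vec in *.
  destruct (Req_dec rho 1) as [E|E].
  - subst rho. replace (vmax x xs) with xs. lra.
    apply vec_ext; intro i. unfold vmax. destruct (Nat.lt_ge_cases i n) as [Hi|Hi].
    + specialize (Hxi i Hi). specialize (Lx i Hi). specialize (Ls i Hi). unfold Rmax; destruct Rle_dec; lra.
    + rewrite Vx, Vs by auto. unfold Rmax; destruct Rle_dec; lra.
  - set (th := 1 - rho). assert (Hth : 0 < th < 1) by (unfold th; lra).
    set (q := fun i => xs i + (Rmax (x i) (xs i) - xs i) / th).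
    assert (Hq : in_box n ubar q).
    { split; [|split]; unfold vle, vzero, is_vec, q.
      - intros i Hi. rewrite Vx, Vs by auto. unfold Rmax; destruct Rle_dec; field; lra.
      - intros i Hi. specialize (Ls i Hi). assert (0 <= (Rmax (x i) (xs i) - xs i) / th).
        { unfold Rdiv; apply Rmult_le_pos; [|left; apply Rinv_0_lt_compat; lra]. pose proof (Rmax_r (x i) (xs i)); lra. } lra.
      - intros i Hi. specialize (Ls i Hi). specialize (Us i Hi). specialize (Hxi i Hi). fold th in Hxi.
        unfold Rmax; destruct Rle_dec.
        + replace ((xs i - xs i) / th) with 0 by (field; lra). lra.
        + assert ((x i - xs i) / th <= ubar i - xs i).
          { apply Rmult_le_reg_r with th; [lra|]. unfold Rdiv; rewrite Rmult_assoc, Rinv_l by lra. nra. }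
          lra. }
    assert (Hle : vle n xs q).
    { intros i Hi. unfold q. assert (0 <= (Rmax (x i) (xs i) - xs i) / th).
      { unfold Rdiv; apply Rmult_le_pos; [|left; apply Rinv_0_lt_compat; lra]. pose proof (Rmax_r (x i) (xs i)); lra. } lra. }
    assert (Hxs : in_box n ubar xs) by (split; auto).
    pose proof (concave n ubar f grad xs q th Hg HDR Hu Hxs Hq Hle ltac:(lra)).
    replace (seg xs q th) with (vmax x xs) in H.
    + pose proof (Hnn q Hq). unfold th in *. nra.
    + apply vec_ext; intro i; unfold seg, q, vmax. field. lra.
Qed.

Lemma exp_pow a m : exp a ^ m = exp (INR m * a).
Proof. induction m. simpl. rewrite Rmult_0_l, exp_0. auto.
  rewrite S_INR. simpl. rewrite IHm, <- exp_plus. f_equal. ring. Qed.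

Lemma e_bound K : (0 < K)%nat -> exp (-1) <= (1 - 1 / INR K) ^ (K - 1).
Proof.
  intros HK. destruct K as [|[|m]]; [lia| |].
  - simpl. left. rewrite <- exp_0. apply exp_increasing. lra.
  - replace (S (S m) - 1)%nat with (S m) by lia.
    assert (Hm : 1 <= INR (S m)) by (apply (le_INR 1); lia).
    assert (EK : INR (S (S m)) = INR (S m) + 1) by (rewrite (S_INR (S m)); auto).
    set (m' := INR (S m)) in *.
    replace (exp (-1)) with (exp (- / m') ^ (S m)).
    2:{ rewrite exp_pow. fold m'. f_equal. field. lra. }
    apply pow_incr. split; [left; apply exp_pos|].
    pose proof (exp_ineq1_le (/ m')). rewrite exp_Ropp.
    rewrite EK. assert (0 < / m') by (apply Rinv_0_lt_compat; lra).
    apply Rmult_le_reg_r with (exp (/ m')); [apply exp_pos|]. rewrite Rinv_l by (apply Rgt_not_eq, exp_pos).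
    assert (1 - 1 / (m' + 1) = m' / (m' + 1)) by (field; lra). rewrite H1.
    assert (m' / (m' + 1) * (1 + / m') = 1) by (field; lra).
    assert (0 <= m' / (m' + 1)) by (unfold Rdiv; apply Rmult_le_pos; [lra| left; apply Rinv_0_lt_compat; lra]).
    nra.
Qed.

Lemma main_bound (n : nat) (ubar : vec) (f : vec -> R) (grad : vec -> vec) (L : R)
         (P : vec -> Prop) (D : R) (xstar : vec) (K : nat)
         (x v : nat -> vec) (t : nat -> R) :
    is_vec n ubar -> (forall i, (i < n)%nat -> 0 < ubar i) ->
    has_gradient_on_box n ubar f grad ->
    nonneg_on_box n ubar f ->
    DR_submodular n ubar f ->
    lipschitz_gradient n ubar grad L ->
    admissible_set n ubar P ->
    is_diameter n P D ->
    is_maximizer P f xstar ->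
    (0 < K)%nat ->
    FW_run n ubar P grad (1 / INR K) x v t ->
    f (x K) >= (1 - 1 / INR K) ^ (K - 1) * f xstar - L * D ^ 2 / (2 * INR K).
Proof.
  intros Vu Hu Hg Hnn HDR HL Hadm Hdiam Hmax HK HFW.
  destruct Hadm as [HPbox [[p0 Hp0] [_ [_ Hdc]]]].
  assert (Hbox0 : in_box n ubar vzero).
  { split; [|split]; intros i Hi; unfold vzero; try lra. specialize (Hu i Hi); lra. }
  assert (H0P : P vzero).
  { apply (Hdc p0 vzero Hp0); try (intros i Hi; unfold vzero; lra). destruct (HPbox p0 Hp0) as [_ [Hl _]]. auto. }
  destruct Hdiam as [[a [b [Pa [Pb Dab]]]] Hdm].
  assert (HD : 0 <= D) by (rewrite <- Dab; apply norm_ge0).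
  destruct Hmax as [Pxs Hxsmax]. assert (Bxs := HPbox _ Pxs).
  assert (Hfs : 0 <= f xstar) by (apply Hnn; auto).
  destruct HL as [HL0 HLip].
  destruct HFW as [Hx0 [Ht0 Hstep]].
  set (g := 1 / INR K) in *.
  assert (HKR : 1 <= INR K) by (apply (le_INR 1); lia).
  assert (Hg0 : 0 < g <= 1).
  { unfold g; split; [apply Rdiv_lt_0_compat; lra|]. apply Rmult_le_reg_r with (INR K); [lra|].
    unfold Rdiv; rewrite Rmult_assoc, Rinv_l by lra. lra. }
  assert (HKg : INR K * g = 1) by (unfold g; field; lra).
  assert (Hroom : forall k, (k < K)%nat -> INR k * g + g <= 1).
  { intros k Hk. assert (INR (S k) <= INR K) by (apply le_INR; lia). rewrite S_INR in H.
    rewrite <- HKg. nra. }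
  assert (Ht : forall k, (k <= K)%nat -> t k = INR k * g).
  { induction k; intros Hk. simpl; rewrite Ht0; ring.
    assert (Hk' : (k < K)%nat) by lia. specialize (IHk ltac:(lia)). specialize (Hroom k Hk').
    assert (0 <= INR k) by apply pos_INR.
    destruct (Hstep k ltac:(nra)) as [_ [_ E]]. rewrite E, IHk. rewrite Rmin_left by lra. rewrite S_INR; ring. }
  assert (Hs : forall k, (k < K)%nat ->
     (P (v k) /\ vle n (v k) (vsub ubar (x k)) /\
     (forall w, P w -> vle n w (vsub ubar (x k)) -> inner n w (grad (x k)) <= inner n (v k) (grad (x k)))) /\
     x (S k) = vadd (x k) (vscale g (v k))).
  { intros k Hk. specialize (Hroom k Hk). assert (0 <= INR k) by apply pos_INR.
    assert (Htk : t k < 1) by (rewrite Ht by lia; nra).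
    destruct (Hstep k Htk) as [A [B _]]. split; auto.
    rewrite B. rewrite Ht by lia. rewrite Rmin_left by lra. auto. }
  set (A := L * g ^ 2 * D ^ 2 / 2).
  assert (HA : 0 <= A) by (unfold A; apply Rmult_le_pos; [|lra]; apply Rmult_le_pos; [apply Rmult_le_pos|]; try lra; apply pow2_ge_0).
  assert (Inv : forall k, (k <= K)%nat ->
     in_box n ubar (x k) /\ (forall i, (i < n)%nat -> x k i <= (1 - (1 - g) ^ k) * ubar i) /\
     f (x k) >= INR k * g * (1 - g) ^ (k - 1) * f xstar - INR k * A).
  { induction k; intros Hk.
    - rewrite Hx0. split; [auto|split].
      + intros i Hi. simpl. unfold vzero. specialize (Hu i Hi). lra.
      + simpl INR. pose proof (Hnn vzero Hbox0).
        replace (0 * g * (1 - g) ^ (0 - 1) * f xstar - 0 * A) with 0 by ring. lra.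
    - assert (Hk' : (k < K)%nat) by lia.
      destruct (IHk ltac:(lia)) as [Bx [Bnd Hf]]. destruct (Hs k Hk') as [[Pv [Vle Vmax]] Ex].
      set (X := x k) in *. set (V := v k) in *.
      pose proof (HPbox V Pv) as BV. destruct BV as [VV [LV UV]].
      pose proof Bx as BX. destruct BX as [VX [LX UX]].
      destruct Bxs as [Vs [Ls Us]].
      unfold vle, vzero, is_vec, vsub in *.
      assert (Hr1 : 0 <= 1 - g <= 1) by lra.
      assert (Hrho : 0 < (1 - g) ^ k <= 1).
      { split.
        - destruct k. simpl; lra. apply pow_lt.
          assert (2 <= INR K) by (apply (le_INR 2); lia). nra.
        - pose proof (pow_incr (1 - g) 1 k ltac:(lra)) as Hp. rewrite pow1 in Hp. auto. }
      set (rho := (1 - g) ^ k) in *.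
      assert (BX' : in_box n ubar (x (S k))).
      { rewrite Ex. split; [|split]; unfold vle, vzero, is_vec, vadd, vscale.
        - intros i Hi. rewrite VX, VV by auto. ring.
        - intros i Hi. specialize (LX i Hi). specialize (LV i Hi). nra.
        - intros i Hi. specialize (UX i Hi). specialize (Vle i Hi).
          assert (g * V i <= g * (ubar i - X i)) by (apply Rmult_le_compat_l; lra).
          assert (0 <= (1-g)*(ubar i - X i)) by (apply Rmult_le_pos; lra). lra. }
      split; [auto|split].
      + intros i Hi. rewrite Ex. unfold vadd, vscale. specialize (Vle i Hi). specialize (Bnd i Hi).
        assert (g * V i <= g * (ubar i - X i)) by (apply Rmult_le_compat_l; lra).
        assert ((1 - g) * X i <= (1 - g) * ((1 - rho) * ubar i)) by (apply Rmult_le_compat_l; lra).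
        simpl pow. fold rho. nra.
      +
        pose proof (descent n ubar f grad L X (x (S k)) Hg (conj HL0 HLip) Bx BX') as Dsc.
        assert (E1 : inner n (grad X) (Defs.vsub (x (S k)) X) = g * inner n (grad X) V).
        { rewrite <- inner_scal_r. apply inner_ext. intros i _. rewrite Ex. unfold Defs.vsub, vadd, vscale. ring. }
        assert (E2 : inner n (Defs.vsub (x (S k)) X) (Defs.vsub (x (S k)) X) = g ^ 2 * inner n V V).
        { unfold inner. rewrite <- sumR_scal. apply sumR_ext. intros i _. rewrite Ex. unfold Defs.vsub, vadd, vscale. ring. }
        rewrite E1, E2 in Dsc.
        assert (HVD : inner n V V <= D ^ 2).
        { pose proof (Hdm V vzero Pv H0P). unfold Defs.dist in H.
          rewrite (norm_ext n _ V) in H by (intros; unfold Defs.vsub, vzero; ring).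
          rewrite <- norm_sq. pose proof (norm_ge0 n V). simpl. nra. }
        set (W := Defs.vsub (vmax X xstar) X).
        assert (PW : P W).
        { apply (Hdc xstar W Pxs); unfold W, is_vec, vle, vzero, Defs.vsub, vmax.
          - intros i Hi. rewrite VX, Vs by auto. unfold Rmax; destruct Rle_dec; lra.
          - intros i Hi. pose proof (Rmax_l (X i) (xstar i)). lra.
          - intros i Hi. specialize (LX i Hi). specialize (Ls i Hi). unfold Rmax; destruct Rle_dec; lra. }
        assert (HW : inner n W (grad X) <= inner n V (grad X)).
        { apply Vmax; auto. unfold vle, Defs.vsub, W, vmax. intros i Hi.
          assert (Rmax (X i) (xstar i) <= ubar i) by (apply Rmax_lub; auto). unfold Defs.vsub. lra. }
        assert (BY : in_box n ubar (vmax X xstar)).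
        { split; [|split]; unfold vle, vzero, is_vec, vmax.
          - intros i Hi. rewrite VX, Vs by auto. unfold Rmax; destruct Rle_dec; lra.
          - intros i Hi. specialize (LX i Hi). pose proof (Rmax_l (X i) (xstar i)). lra.
          - intros i Hi. apply Rmax_lub; auto. }
        assert (HXY : vle n X (vmax X xstar)) by (intros i Hi; apply Rmax_l).
        destruct (bprime n ubar f grad X (vmax X xstar) Hg HDR Hu Bx BY HXY) as [_ Hb2].
        fold W in Hb2.
        assert (Bxs' : in_box n ubar xstar) by (split; auto).
        pose proof (lemC n ubar f grad X xstar rho Hg HDR Hu Hnn Bx Bxs' Hrho Bnd) as HC.
        pose proof (inner_comm n W (grad X)). pose proof (inner_comm n V (grad X)).
        assert (Hstepf : f (x (S k)) >= (1 - g) * f X + g * (rho * f xstar) - A).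
        { assert (g * (rho * f xstar - f X) <= g * inner n (grad X) V) by (apply Rmult_le_compat_l; lra).
          assert (L / 2 * (g ^ 2 * inner n V V) <= A).
          { unfold A. assert (0 <= L / 2 * g ^ 2) by (apply Rmult_le_pos; [lra|apply pow2_ge_0]).
            apply Rmult_le_compat_l with (r := L / 2 * g ^ 2) in HVD; auto. lra. }
          lra. }
        assert (Key : INR k * (1 - g) ^ (k - 1) * (1 - g) = INR k * rho).
        { unfold rho. destruct k. simpl; ring. replace (S k - 1)%nat with k by lia. simpl; ring. }
        assert (Hm : (1 - g) * (INR k * g * (1 - g) ^ (k - 1) * f xstar - INR k * A) <= (1 - g) * f X)
          by (apply Rmult_le_compat_l; lra).
        assert (0 <= INR k) by apply pos_INR.
        replace (S k - 1)%nat with k by lia. fold rho. rewrite S_INR.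
        assert ((1 - g) * (INR k * g * (1 - g) ^ (k - 1) * f xstar - INR k * A) = g * (INR k * rho) * f xstar - (1 - g) * (INR k * A)).
        { rewrite <- Key. ring. }
        assert (0 <= g * (INR k * A)) by (apply Rmult_le_pos; [lra|apply Rmult_le_pos; auto]).
        nra. }
  destruct (Inv K ltac:(lia)) as [_ [_ H]].
  replace (L * D ^ 2 / (2 * INR K)) with (INR K * A) by (unfold A, g; field; lra).
  rewrite HKg, Rmult_1_l in H. auto.
Qed.

Theorem corollary1 :
  exists C : R, 0 <= C /\
  forall (n : nat) (ubar : vec) (f : vec -> R) (grad : vec -> vec) (L : R)
         (P : vec -> Prop) (D : R) (xstar : vec) (K : nat)
         (x v : nat -> vec) (t : nat -> R),
    is_vec n ubar -> (forall i, (i < n)%nat -> 0 < ubar i) ->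
    has_gradient_on_box n ubar f grad ->
    nonneg_on_box n ubar f ->
    DR_submodular n ubar f ->
    lipschitz_gradient n ubar grad L ->
    admissible_set n ubar P ->
    is_diameter n P D ->
    is_maximizer P f xstar ->
    (0 < K)%nat ->
    FW_run n ubar P grad (1 / INR K) x v t ->
    f (x K) >= exp (-1) * f xstar - L * D ^ 2 / (2 * INR K)
               - C / (INR K ^ 2) * f xstar.
Proof.
  exists 0. split; [lra|].
  intros n ubar f grad L P D xstar K x v t Vu Hu Hg Hnn HDR HL Hadm Hdiam Hmax HK HFW.
  pose proof (main_bound n ubar f grad L P D xstar K x v t Vu Hu Hg Hnn HDR HL Hadm Hdiam Hmax HK HFW) as H.
  pose proof (e_bound K HK) as He.
  assert (Hfs : 0 <= f xstar).
  { apply Hnn. destruct Hadm as [HPbox _]. apply HPbox. destruct Hmax; auto. }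
  assert (exp (-1) * f xstar <= (1 - 1 / INR K) ^ (K - 1) * f xstar) by (apply Rmult_le_compat_r; auto).
  unfold Rdiv at 2. rewrite Rmult_0_l, Rmult_0_l. lra.
Qed.
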